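(* Let $N\ge1$, let $U\in\mathrm U(2N)$ with upper-left $N\times N$ block $A$, and let $A=W_1\Sigma V_1^\dagger$ be a singular value decomposition, $\Sigma=\mathrm{diag}(\sigma_0,\dots,\sigma_{N-1})$. Let $d\ge1$ and $\varphi_0,\dots,\varphi_{2d}\in\mathbb R$, put $Z_\varphi:=\mathrm{diag}(e^{i\varphi}I_N,e^{-i\varphi}I_N)$, and define the $2N\times 2N$ unitary $$\mathcal O:=Z_{\varphi_0}\prod_{j=1}^d\big(U^\dagger Z_{\varphi_{2j-1}}UZ_{\varphi_{2j}}\big).$$ Define $\tilde\varphi_0=\varphi_0+\pi/4$, $\tilde\varphi_{2d}=\varphi_{2d}+\pi/4$, $\tilde\varphi_i=\varphi_i+\pi/2$ for even $i\in\{2,\dots,2d-2\}$, and $\tilde\varphi_i=\varphi_i-\pi/2$ for odd $i$, and let $P(x):=\langle 0|e^{i\tilde\varphi_0Z}\prod_{j=1}^{2d}W(x)e^{i\tilde\varphi_jZ}|0\rangle$. Then $P$ is an even polynomial of degree at most $2d$, and the upper-left $N\times N$ block of $\mathcal O$ equals $V_1P(\Sigma)V_1^\dagger$; equivalently, writing $P(x)=\tilde P(x^2)$, it equals $\tilde P(A^\dagger A)$.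
   Context: $W(x):=\begin{pmatrix}x& i\sqrt{1-x^2}\\ i\sqrt{1-x^2}&x\end{pmatrix}$ for $x\in[-1,1]$, $Z=\mathrm{diag}(1,-1)$, and $P(\Sigma)=\mathrm{diag}(P(\sigma_0),\dots,P(\sigma_{N-1}))$. The ''upper-left block'' of a $2N\times2N$ matrix $B$ is $(\langle0|\otimes I_N)B(|0\rangle\otimes I_N)$. *)

(* Defs.v *)
From HB Require Import structures.
From mathcomp Require Import all_boot all_order all_algebra.
From mathcomp Require Import complex.
From mathcomp Require Import reals trigo.
Set Implicit Arguments. Unset Strict Implicit. Unset Printing Implicit Defensive.
Import Order.TTheory GRing.Theory Num.Theory.
Local Open Scope ring_scope.
Local Open Scope complex_scope.

Section Defs.
Variable R : realType.
Local Notation C := R[i].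

Definition expi (t : R) : C := (cos t)%:C + 'i * (sin t)%:C.

Definition adj m n (A : 'M[C]_(m, n)) : 'M[C]_(n, m) :=
  \matrix_(i, j) (A j i)^*.

Definition unitary n (U : 'M[C]_n) : Prop :=
  U *m adj U = 1%:M /\ adj U *m U = 1%:M.

Definition Zphi N (phi : R) : 'M[C]_(N + N) :=
  block_mx ((expi phi)%:M) 0 0 ((expi (- phi))%:M).

Definition Oseq N (U : 'M[C]_(N + N)) (d : nat) (phi : nat -> R) : 'M[C]_(N + N) :=
  Zphi N (phi 0%N) *m
  \big[mulmx/1%:M]_(1 <= j < d.+1)
     (adj U *m Zphi N (phi (2 * j).-1) *m U *m Zphi N (phi (2 * j)%N)).

Definition phit (d : nat) (phi : nat -> R) (i : nat) : R :=
  if i == 0%N then phi 0%N + pi / 4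
  else if i == (2 * d)%N then phi (2 * d)%N + pi / 4
  else if odd i then phi i - pi / 2
  else phi i + pi / 2.

Definition Wx (x : R) : 'M[C]_2 :=
  \matrix_(i < 2, j < 2)
    (if i == j then x%:C else 'i * (Num.sqrt (1 - x ^+ 2))%:C).

Definition expZ (t : R) : 'M[C]_2 :=
  \matrix_(i < 2, j < 2)
    (if i == j then (if i == 0 :> nat then expi t else expi (- t)) else 0).

Definition Pqsp (d : nat) (phi : nat -> R) (x : R) : C :=
  (expZ (phit d phi 0%N) *m
   \big[mulmx/1%:M]_(1 <= j < (2 * d).+1) (Wx x *m expZ (phit d phi j)))
    ord0 ord0.

Definition even_poly_p (p : {poly C}) : Prop :=
  forall k : nat, odd k -> p`_k = 0.

Definition mxpow n (M : 'M[C]_n) (k : nat) : 'M[C]_n :=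
  iter k (mulmx M) 1%:M.
Definition poly_mx n (p : {poly C}) (M : 'M[C]_n) : 'M[C]_n :=
  \sum_(k < size p) p`_k *: mxpow M k.

End Defs.

(* Main.v *)
Require Import Defs.
From HB Require Import structures.
From mathcomp Require Import all_boot all_order all_algebra.
From mathcomp Require Import complex.
From mathcomp Require Import reals trigo.
From mathcomp Require Import ring lra zify.
Import Order.TTheory GRing.Theory Num.Theory.
Local Open Scope ring_scope.
Local Open Scope complex_scope.

HB.instance Definition mulmx_monoid (K : pzSemiRingType) (k : nat) :=
  Monoid.isLaw.Build 'M[K]_k 1%:M (@mulmx K k k k) (@mulmxA K k k k k) (@mul1mx K k k) (@mulmx1 K k k).

Section Aux.
Variable R : realType.
Local Notation C := R[i].

Lemma sqr_iC : 'i * 'i = -1 :> C.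
Proof. by rewrite -expr2 sqr_i. Qed.

Lemma expiD_aux (K : comRingType) (i ca cb sa sb : K) : i * i = -1 ->
  ca * cb - sa * sb + i * (sa * cb + ca * sb) = (ca + i * sa) * (cb + i * sb).
Proof.
move=> hi; apply/eqP; rewrite -subr_eq0; apply/eqP.
transitivity (- (sa * sb * (i * i + 1))); first by ring.
by rewrite hi addNr mulr0 oppr0.
Qed.

Lemma expiD (a b : R) : expi (a + b) = expi a * expi b.
Proof.
rewrite /expi cosD sinD !rmorphB !rmorphD !rmorphM /=.
exact: expiD_aux sqr_iC.
Qed.
Lemma expi_pihalf : expi (pi / 2) = 'i :> C.
Proof. by rewrite /expi cos_pihalf sin_pihalf rmorph0 rmorph1 add0r mulr1. Qed.

Lemma expi_Npihalf : expi (- (pi / 2)) = - 'i :> C.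
Proof. by rewrite /expi cosN sinN cos_pihalf sin_pihalf rmorph0 rmorphN rmorph1 add0r mulrN1. Qed.

Lemma expi_piquart2 : expi (pi / 4) * expi (pi / 4) = 'i :> C.
Proof. by rewrite -expiD -expi_pihalf; congr expi; field. Qed.

Definition adjE m n (A : 'M[C]_(m, n)) : adj A = (map_mx conjc A)^T.
Proof. by apply/matrixP => i j; rewrite /adj !mxE. Qed.

Lemma adj_mul m n p (A : 'M[C]_(m, n)) (B : 'M[C]_(n, p)) :
  adj (A *m B) = adj B *m adj A.
Proof. by rewrite !adjE map_mxM trmx_mul. Qed.

Lemma adjK m n (A : 'M[C]_(m, n)) : adj (adj A) = A.
Proof. by apply/matrixP => i j; rewrite /adj !mxE conjcK. Qed.

Lemma adj_block m1 m2 n1 n2 (a : 'M[C]_(m1, n1)) (b : 'M[C]_(m1, n2))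
  (c : 'M[C]_(m2, n1)) (d : 'M[C]_(m2, n2)) :
  adj (block_mx a b c d) = block_mx (adj a) (adj c) (adj b) (adj d).
Proof. by rewrite !adjE map_block_mx tr_block_mx. Qed.

Lemma adj_diag_real m (s : 'I_m -> R) :
  adj (diag_mx (\row_k (s k)%:C)) = diag_mx (\row_k (s k)%:C).
Proof.
apply/matrixP => i j; rewrite /adj !mxE eq_sym.
by case: eqP => [->|_]; rewrite ?mulr1n ?mulr0n ?conjc_real ?conjc0.
Qed.


Definition stepM (z1 w1 z2 w2 : C) (fg : {poly C} * {poly C}) : {poly C} * {poly C} :=
  let f' := z2 *: fg.1 in let g' := w2 *: fg.2 in
  let h1 := z1 *: (f' + g' - 'X * g') in
  let h2 := w1 *: (f' - 'X * g') in
  ('X * h1 + (1 - 'X) * h2, h1 - h2).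

Section HM.
Variable n : nat.
Variable M : 'M[C]_n.+1.
Lemma hMD p q : horner_mx M (p + q) = horner_mx M p + horner_mx M q.
Proof. exact: rmorphD. Qed.
Lemma hMB p q : horner_mx M (p - q) = horner_mx M p - horner_mx M q.
Proof. exact: rmorphB. Qed.
Lemma hMN p : horner_mx M (- p) = - horner_mx M p.
Proof. exact: rmorphN. Qed.
Lemma hMZ (c : C) p : horner_mx M (c *: p) = c *: horner_mx M p.
Proof. exact: linearZ. Qed.
Lemma hMXl p : horner_mx M ('X * p) = M *m horner_mx M p.
Proof. by rewrite rmorphM /= horner_mx_X. Qed.
Lemma hM1X p : horner_mx M ((1 - 'X) * p) = horner_mx M p - M *m horner_mx M p.
Proof. by rewrite mulrBl mul1r hMB hMXl. Qed.
End HM.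

Fixpoint runR (z1 w1 z2 w2 : nat -> C) (m : nat) (fg : {poly C} * {poly C}) :=
  if m is m'.+1 then runR z1 w1 z2 w2 m' (stepM (z1 m') (w1 m') (z2 m') (w2 m') fg) else fg.

Section MatStep.
Variable n : nat.
Variables A B Cm D : 'M[C]_n.+1.
Hypothesis hBB : B *m adj B = 1%:M - A *m adj A.
Hypothesis hDB : D *m adj B = - (Cm *m adj A).
Hypothesis hCC : adj Cm *m Cm = 1%:M - adj A *m A.
Hypothesis hDC : adj D *m Cm = - (adj B *m A).
Local Notation M := (adj A *m A).
Local Notation hM := (horner_mx M).
Definition Sst (f g : {poly C}) : 'M[C]_(n.+1 + n.+1, n.+1) :=
  col_mx (hM f) (adj B *m A *m hM g).

Lemma hB1 (Y : 'M[C]_n.+1) : B *m (adj B *m Y) = Y - A *m (adj A *m Y).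
Proof. by rewrite mulmxA hBB mulmxBl mul1mx mulmxA. Qed.
Lemma hD1 (Y : 'M[C]_n.+1) : D *m (adj B *m Y) = - (Cm *m (adj A *m Y)).
Proof. by rewrite mulmxA hDB mulNmx mulmxA. Qed.
Lemma hC1 (Y : 'M[C]_n.+1) : adj Cm *m (Cm *m Y) = Y - adj A *m (A *m Y).
Proof. by rewrite mulmxA hCC mulmxBl mul1mx mulmxA. Qed.
Lemma hDd1 (Y : 'M[C]_n.+1) : adj D *m (Cm *m Y) = - (adj B *m (A *m Y)).
Proof. by rewrite mulmxA hDC mulNmx mulmxA. Qed.

Lemma Y12 (z1 w1 z2 w2 : C) (F G : 'M[C]_n.+1) :
  (A *m (z2 *: F) + B *m (w2 *: (adj B *m (A *m G))) =
    A *m (z2 *: F + w2 *: G - M *m (w2 *: G))) /\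
  (Cm *m (z2 *: F) + D *m (w2 *: (adj B *m (A *m G))) =
    Cm *m (z2 *: F - M *m (w2 *: G))).
Proof.
have eM : M *m (w2 *: G) = w2 *: (adj A *m (A *m G)).
  by rewrite -mulmxA -!scalemxAr.
rewrite eM; split.
  by rewrite -[B *m (w2 *: _)]scalemxAr hB1 scalerBr addrA !(mulmxDr, mulmxBr, mulmxN) -!scalemxAr.
by rewrite -[D *m (w2 *: _)]scalemxAr hD1 scalerN !(mulmxDr, mulmxBr, mulmxN) -!scalemxAr.
Qed.

Lemma stepS z1 w1 z2 w2 f g :
  adj (block_mx A B Cm D) *m block_mx (z1%:M) 0 0 (w1%:M) *m block_mx A B Cm D
    *m block_mx (z2%:M) 0 0 (w2%:M) *m Sst f g =
  Sst (stepM z1 w1 z2 w2 (f, g)).1 (stepM z1 w1 z2 w2 (f, g)).2.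
Proof.
rewrite /Sst adj_block -!mulmxA !mul_block_col !mul_scalar_mx !mul0mx !addr0 !add0r.
rewrite /stepM /=; congr (col_mx _ _).
  rewrite !(hMD, hMB, hMN, hMZ, hMXl, hM1X).
  have [-> ->] := Y12 z1 w1 z2 w2 (hM f) (hM g).
  by rewrite !scalemxAr !mulmxA -!mulmxA hC1.
rewrite !(hMD, hMB, hMN, hMZ, hMXl).
have [-> ->] := Y12 z1 w1 z2 w2 (hM f) (hM g).
by rewrite !scalemxAr hDd1 -!mulmxA -!mulmxBr.
Qed.

Variable phi : nat -> R.
Definition zM1 k := expi (phi (2 * k.+1).-1).
Definition wM1 k := expi (- phi (2 * k.+1).-1).
Definition zM2 k := expi (phi (2 * k.+1)).
Definition wM2 k := expi (- phi (2 * k.+1)).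
Local Notation Ub := (block_mx A B Cm D).

Lemma chainM m fg :
  (\big[mulmx/1%:M]_(0 <= k < m) (adj Ub *m Zphi n.+1 (phi (2 * k.+1).-1) *m Ub
       *m Zphi n.+1 (phi (2 * k.+1)))) *m Sst fg.1 fg.2 =
  Sst (runR zM1 wM1 zM2 wM2 m fg).1 (runR zM1 wM1 zM2 wM2 m fg).2.
Proof.
elim: m fg => [|m IH] fg; first by rewrite big_geq // mul1mx.
by rewrite big_nat_recr //= -mulmxA /Zphi stepS; apply: IH.
Qed.

Lemma ulsubE (X : 'M[C]_(n.+1 + n.+1)) : ulsubmx X = usubmx (X *m Sst 1 0).
Proof.
rewrite /Sst rmorph1 rmorph0 mulmx0 -[X in X *m _]hsubmxK mul_row_col mulmx0 addr0 mulmx1.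
by apply/matrixP => i j; rewrite !mxE.
Qed.

Lemma ulO d : ulsubmx (Oseq Ub d phi) =
  horner_mx M (expi (phi 0) *: (runR zM1 wM1 zM2 wM2 d (1, 0)).1).
Proof.
rewrite /Oseq ulsubE -mulmxA big_add1 /= (chainM d (1, 0)) /Zphi mul_block_col.
by rewrite col_mxKu mul0mx addr0 mul_scalar_mx hMZ.
Qed.
End MatStep.


Definition vec2 (a b : C) : 'M[C]_(2, 1) :=
  \matrix_(i < 2, j < 1) (if i == 0 :> nat then a else b).

Lemma expZ_vec t a b : expZ t *m vec2 a b = vec2 (expi t * a) (expi (- t) * b).
Proof.
apply/matrixP => i j; rewrite /expZ /vec2 !mxE !big_ord_recr big_ord0 /= !mxE /=.
by case: i => [[|[|//]] Hi] /=; rewrite ?add0r ?mul0r ?add0r ?addr0.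
Qed.

Lemma W_vec x a b : Wx x *m vec2 a b =
  vec2 (x%:C * a + 'i * (Num.sqrt (1 - x ^+ 2))%:C * b)
       ('i * (Num.sqrt (1 - x ^+ 2))%:C * a + x%:C * b).
Proof.
apply/matrixP => i j; rewrite /Wx /vec2 !mxE !big_ord_recr big_ord0 /= !mxE /=.
by case: i => [[|[|//]] Hi] /=; rewrite ?add0r ?mul0r ?add0r ?addr0.
Qed.

Lemma eq_mod (K : comRingType) (i a b k : K) : i * i = -1 -> a - b = (i * i + 1) * k -> a = b.
Proof. by move=> hi; rewrite hi addNr mul0r => /eqP; rewrite subr_eq0 => /eqP. Qed.

Lemma pair_id (K : comRingType) (i y e1 e1' e2 e2' P Q : K) : i * i = -1 ->
  let C1 := e1 * (e2 * P + i * (1 - y) * (e2' * (i * Q))) in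
  let C2 := e1' * (i * (e2 * P) + y * (e2' * (i * Q))) in
  let z1 := i * e1 in let w1 := - i * e1' in let z2 := - i * e2 in let w2 := i * e2' in
  let H1 := z1 * (z2 * P + w2 * Q - y * (w2 * Q)) in let H2 := w1 * (z2 * P - y * (w2 * Q)) in
  y * C1 + i * (1 - y) * C2 = y * H1 + (1 - y) * H2 /\ i * C1 + C2 = i * (H1 - H2).
Proof.
move=> hi C1 C2 z1 w1 z2 w2 H1 H2.
have h1 : H1 = e1 * e2 * P - e1 * e2' * Q + y * e1 * e2' * Q.
  by apply: (@eq_mod _ i _ _ (- e1 * e2 * P + e1 * e2' * Q - y * e1 * e2' * Q) hi); rewrite /H1 /z1 /z2 /w2; ring.
have h2 : H2 = - e1' * e2 * P - y * e1' * e2' * Q.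
  by apply: (@eq_mod _ i _ _ (e1' * e2 * P + y * e1' * e2' * Q) hi); rewrite /H2 /w1 /z2 /w2; ring.
rewrite h1 h2; split.
  apply: (@eq_mod _ i _ _ ((1 - y) * e1' * e2 * P + y * (1 - y) * e1 * e2' * Q + y * (1 - y) * e1' * e2' * Q) hi).
  by rewrite /C1 /C2; ring.
apply: (@eq_mod _ i _ _ (i * (1 - y) * e1 * e2' * Q) hi).
by rewrite /C1 /C2; ring.
Qed.

Section X.
Variable x : R.
Hypothesis hx : -1 <= x <= 1.
Local Notation xc := (x%:C).
Local Notation sc := ((Num.sqrt (1 - x ^+ 2))%:C).
Local Notation y := (xc * xc).

Lemma hs : sc * sc = 1 - xc * xc.
Proof.
have h0 : 0 <= 1 - x ^+ 2 by case/andP: hx => h1 h2; nra.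
by rewrite -rmorphM -expr2 sqr_sqrtr // rmorphB rmorph1 rmorphXn expr2.
Qed.

Lemma E2 a b : Wx x *m vec2 a (sc * xc * b) = vec2 (xc * (a + 'i * (1 - y) * b)) (sc * ('i * a + y * b)).
Proof. by rewrite W_vec -hs; congr vec2; ring. Qed.

Lemma E4 c1 c2 : Wx x *m vec2 (xc * c1) (sc * c2) = vec2 (y * c1 + 'i * (1 - y) * c2) (sc * xc * ('i * c1 + c2)).
Proof. by rewrite W_vec -hs; congr vec2; ring. Qed.

Lemma pairV b1 b2 P Q : (Wx x *m expZ b1) *m ((Wx x *m expZ b2) *m vec2 P (sc * xc * ('i * Q))) =
  let e1 := expi b1 in let e1' := expi (- b1) in let e2 := expi b2 in let e2' := expi (- b2) in
  let C1 := e1 * (e2 * P + 'i * (1 - y) * (e2' * ('i * Q))) in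
  let C2 := e1' * ('i * (e2 * P) + y * (e2' * ('i * Q))) in
  vec2 (y * C1 + 'i * (1 - y) * C2) (sc * xc * ('i * C1 + C2)).
Proof.
rewrite -!mulmxA expZ_vec.
have -> : expi (- b2) * (sc * xc * ('i * Q)) = sc * xc * (expi (- b2) * ('i * Q)) by ring.
rewrite E2 expZ_vec.
have -> : expi b1 * (xc * (expi b2 * P + 'i * (1 - y) * (expi (- b2) * ('i * Q)))) =
  xc * (expi b1 * (expi b2 * P + 'i * (1 - y) * (expi (- b2) * ('i * Q)))) by ring.
have -> : expi (- b1) * (sc * ('i * (expi b2 * P) + y * (expi (- b2) * ('i * Q)))) =
  sc * (expi (- b1) * ('i * (expi b2 * P) + y * (expi (- b2) * ('i * Q)))) by ring.
by rewrite E4.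
Qed.

Variable al : nat -> R.
Definition zS1 k := 'i * expi (al (2 * k).+1).
Definition wS1 k := - 'i * expi (- al (2 * k).+1).
Definition zS2 k := - 'i * expi (al (2 * k).+2).
Definition wS2 k := 'i * expi (- al (2 * k).+2).
Definition Vv (fg : {poly C} * {poly C}) := vec2 fg.1.[y] (sc * xc * ('i * fg.2.[y])).

Lemma stepV k fg :
  ((Wx x *m expZ (al (2 * k).+1)) *m (Wx x *m expZ (al (2 * k).+2))) *m Vv fg =
  Vv (stepM (zS1 k) (wS1 k) (zS2 k) (wS2 k) fg).
Proof.
rewrite -mulmxA /Vv pairV /=.
have [h1 h2] := @pair_id _ 'i y (expi (al (2 * k).+1)) (expi (- al (2 * k).+1))
  (expi (al (2 * k).+2)) (expi (- al (2 * k).+2)) fg.1.[y] fg.2.[y] sqr_iC.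
congr vec2; [rewrite h1 | rewrite h2]; rewrite /stepM /zS1 /wS1 /zS2 /wS2 /= !hornerE; ring.
Qed.

Lemma chainS m fg :
  (\big[mulmx/1%:M]_(0 <= k < m) ((Wx x *m expZ (al (2 * k).+1)) *m (Wx x *m expZ (al (2 * k).+2))))
    *m Vv fg = Vv (runR zS1 wS1 zS2 wS2 m fg).
Proof.
elim: m fg => [|m IH] fg; first by rewrite big_geq // mul1mx.
by rewrite big_nat_recr //= -mulmxA stepV IH.
Qed.

End X.
End Aux.

Arguments vec2 {R}.
Arguments stepM {R}.
Arguments runR {R}.
Arguments zS1 {R}. Arguments wS1 {R}. Arguments zS2 {R}. Arguments wS2 {R}.
Arguments zM1 {R}. Arguments wM1 {R}. Arguments zM2 {R}. Arguments wM2 {R}.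
Arguments Vv {R}. Arguments expZ_vec {R}. Arguments W_vec {R}. Arguments expiD {R}.
Arguments chainS {R x}.

Section S3.
Variable R : realType.
Local Notation C := R[i].

Lemma entry00 (X Y : 'M[C]_2) : (X *m Y) 0 0 = (X *m (Y *m vec2 1 0)) 0 0.
Proof.
rewrite !mxE; apply: eq_bigr => k _.
rewrite /vec2 !mxE !big_ord_recr big_ord0 /= !mxE /= mulr1 mulr0 addr0 add0r.
by congr (_ * Y k _); apply: val_inj.
Qed.

Lemma pairing (F : nat -> 'M[C]_2) m :
  \big[mulmx/1%:M]_(1 <= j < (2 * m).+1) F j =
  \big[mulmx/1%:M]_(0 <= k < m) (F (2 * k).+1 *m F (2 * k).+2).
Proof.
elim: m => [|m IH]; first by rewrite !big_geq.
have -> : (2 * m.+1).+1 = ((2 * m).+2).+1 by rewrite mulnS add2n.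
by rewrite big_nat_recr // big_nat_recr //= IH big_nat_recr //= mulmxA.
Qed.

Lemma stepM_scale z1 w1 z2 w2 (c : C) f g :
  stepM z1 w1 z2 w2 (c *: f, c *: g) =
  (c *: (stepM z1 w1 z2 w2 (f, g)).1, c *: (stepM z1 w1 z2 w2 (f, g)).2).
Proof. by rewrite /stepM /=; congr (_, _); rewrite -!mul_polyC; ring. Qed.

Lemma runR_scale z1 w1 z2 w2 m (c : C) f g :
  runR z1 w1 z2 w2 m (c *: f, c *: g) =
  (c *: (runR z1 w1 z2 w2 m (f, g)).1, c *: (runR z1 w1 z2 w2 m (f, g)).2).
Proof.
elim: m f g => [|m IH] f g //=.
by rewrite stepM_scale IH -!surjective_pairing.
Qed.

Lemma runR_ext (z1 w1 z2 w2 z1' w1' z2' w2' : nat -> C) m fg :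
  (forall k, (k < m)%N -> [/\ z1 k = z1' k, w1 k = w1' k, z2 k = z2' k & w2 k = w2' k]) ->
  runR z1 w1 z2 w2 m fg = runR z1' w1' z2' w2' m fg.
Proof.
elim: m fg => [|m IH] fg h //=.
have [-> -> -> ->] := h m (ltnSn m).
by apply: IH => k hk; apply: h; apply: ltnW.
Qed.

Lemma PqspE (d : nat) (phi : nat -> R) (x : R) (hx : -1 <= x <= 1) :
  Pqsp d phi x = expi (phit d phi 0) *
   (runR (zS1 (phit d phi)) (wS1 (phit d phi)) (zS2 (phit d phi)) (wS2 (phit d phi)) d (1, 0)).1.[x%:C * x%:C].
Proof.
rewrite /Pqsp entry00 pairing.
have -> : vec2 1 0 = Vv x (1, 0).
  by rewrite /Vv /= -[1 : {poly C}]polyC1 hornerC horner0 !mulr0.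
by rewrite (chainS hx) /Vv expZ_vec /vec2 mxE.
Qed.

Lemma expi_Nsub (a : R) : expi (- (a - pi / 2)) = 'i * expi (- a).
Proof. by rewrite opprB addrC expiD expi_pihalf mulrC. Qed.

Lemma imagE : (Num.imaginary : C) = 'i%C.
Proof. by []. Qed.

Lemma iE (e : C) : - ('i * 'i) * e = e.
Proof. by rewrite sqr_iC opprK mul1r. Qed.

Lemma phase_lemmas (d : nat) (phi : nat -> R) :
  [/\ forall k, zS1 (phit d.+1 phi) k = zM1 phi k,
      forall k, wS1 (phit d.+1 phi) k = wM1 phi k,
      forall k, (k < d)%N -> zS2 (phit d.+1 phi) k = zM2 phi k,
      forall k, (k < d)%N -> wS2 (phit d.+1 phi) k = wM2 phi k &
      zS2 (phit d.+1 phi) d = (- 'i * expi (pi / 4)) * zM2 phi d].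
Proof.
have e1 k : ((2 * k.+1).-1 = (2 * k).+1)%N by rewrite mulnS add2n.
have e2 k : (2 * k.+1 = (2 * k).+2)%N by rewrite mulnS add2n.
have o1 k : odd (2 * k)%N.+1 by rewrite /= mul2n odd_double.
have o2 k : odd (2 * k)%N.+2 = false by rewrite /= mul2n odd_double.
have z1 k : ((2 * k).+1 == 0)%N = false by [].
have z2 k : ((2 * k).+2 == 0)%N = false by [].
have n1 k : ((2 * k).+1 == 2 * d.+1)%N = false by apply/eqP; lia.
split.
- move=> k; rewrite /zS1 /zM1 /phit (e1 k) z1 n1 o1 expiD expi_Npihalf.
  by rewrite -[RHS]iE ?imagE; ring.
- move=> k; rewrite /wS1 /wM1 /phit (e1 k) z1 n1 o1 expi_Nsub.
  by rewrite -[RHS]iE ?imagE; ring.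
- move=> k hk; have n2 : ((2 * k).+2 == 2 * d.+1)%N = false by apply/eqP; lia.
  rewrite /zS2 /zM2 /phit (e2 k) z2 n2 o2 expiD expi_pihalf.
  by rewrite -[RHS]iE ?imagE; ring.
- move=> k hk; have n2 : ((2 * k).+2 == 2 * d.+1)%N = false by apply/eqP; lia.
  rewrite /wS2 /wM2 /phit (e2 k) z2 n2 o2 opprD expiD expi_Npihalf.
  by rewrite -[RHS]iE ?imagE; ring.
rewrite /zS2 /zM2 /phit (e2 d) z2 eqxx expiD; ring.
Qed.

Lemma stepM_first (z1 w1 z2 w2 w2' c : C) :
  stepM z1 w1 (c * z2) w2 (1, 0) = stepM z1 w1 z2 w2' (c *: 1, c *: 0).
Proof. by rewrite /stepM /= !scaler0 scalerA (mulrC c z2). Qed.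

Lemma PqspM (d : nat) (phi : nat -> R) (x : R) (hx : -1 <= x <= 1) : (0 < d)%N ->
  Pqsp d phi x = (expi (phi 0) *: (runR (zM1 phi) (wM1 phi) (zM2 phi) (wM2 phi) d (1, 0)).1).[x%:C * x%:C].
Proof.
case: d => // d _.
rewrite (PqspE _ _ _ hx).
have [h1 h2 h3 h4 h5] := phase_lemmas d phi.
rewrite [runR _ _ _ _ d.+1 _]/= h1 h2 h5 (stepM_first _ _ _ _ (wM2 phi d)).
rewrite (runR_ext _ _ _ _ (zM1 phi) (wM1 phi) (zM2 phi) (wM2 phi)); last first.
  by move=> k hk; split; rewrite ?h1 ?h2 ?h3 ?h4.
have runS (z1 w1 z2 w2 : nat -> C) m fg :
  runR z1 w1 z2 w2 m (stepM (z1 m) (w1 m) (z2 m) (w2 m) fg) = runR z1 w1 z2 w2 m.+1 fg by [].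
rewrite runS runR_scale /= !hornerZ /phit eqxx expiD.
set F := (runR _ _ _ _ _ _).1.[_].
rewrite (_ : expi (phi 0) * expi (pi / 4) * ((- 'i * expi (pi / 4)) * F) =
   - 'i * (expi (pi / 4) * expi (pi / 4)) * (expi (phi 0) * F)); last by ring.
by rewrite expi_piquart2 ?imagE mulNr iE.
Qed.

End S3.

Arguments stepM {R}.
Arguments runR {R}.

Section S4.
Set Implicit Arguments. Unset Strict Implicit.
Variable R : realType.
Local Notation C := R[i].
Implicit Types p q : {poly C}.

Lemma sDk p q k : (size p <= k)%N -> (size q <= k)%N -> (size (p + q)%R <= k)%N.
Proof. by move=> hp hq; rewrite (leq_trans (size_polyD p q)) // geq_max hp hq. Qed.
Lemma sBk p q k : (size p <= k)%N -> (size q <= k)%N -> (size (p - q)%R <= k)%N.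
Proof. by move=> hp hq; apply: sDk; rewrite ?size_polyN. Qed.
Lemma sZk (a : C) p k : (size p <= k)%N -> (size (a *: p)%R <= k)%N.
Proof. by move=> hp; apply: leq_trans (size_scale_leq _ _) hp. Qed.
Lemma sXk p k : (size p <= k)%N -> (size ('X * p)%R <= k.+1)%N.
Proof. by move=> hp; have := size_polyMleq 'X p; rewrite size_polyX; lia. Qed.
Lemma s1Xk p k : (size p <= k)%N -> (size ((1 - 'X) * p)%R <= k.+1)%N.
Proof.
move=> hp; have h : (size (1 - 'X : {poly C})%R <= 2)%N by apply: sBk; rewrite ?size_poly1 ?size_polyX.
apply: leq_trans (size_polyMleq _ _) _; rewrite -subn1 leq_subLR; exact: (leq_add h hp).
Qed.

Lemma stepM_size (z1 w1 z2 w2 : C) k (f g : {poly C}) : (size f <= k.+1)%N -> (size g <= k)%N ->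
  (size (stepM z1 w1 z2 w2 (f, g)).1 <= k.+2)%N /\ (size (stepM z1 w1 z2 w2 (f, g)).2 <= k.+1)%N.
Proof.
move=> hf hg; rewrite /stepM /=.
have hf' := sZk z2 hf.
have hg' := sZk w2 (leq_trans hg (leqnSn k)).
have hXg := sXk (sZk w2 hg).
have h1 := sZk z1 (sBk (sDk hf' hg') hXg).
have h2 := sZk w1 (sBk hf' hXg).
by split; [apply: sDk; [apply: sXk h1 | apply: s1Xk h2] | apply: sBk].
Qed.

Lemma runR_size (z1 w1 z2 w2 : nat -> C) m : forall k (f g : {poly C}), (size f <= k.+1)%N -> (size g <= k)%N ->
  (size (runR z1 w1 z2 w2 m (f, g)).1 <= (k + m).+1)%N.
Proof.
elim: m => [|m IH] k f g hf hg /=; first by rewrite addn0.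
have [h1 h2] := stepM_size (z1 m) (w1 m) (z2 m) (w2 m) hf hg.
move: h1 h2; case: (stepM _ _ _ _ _) => f' g' /= h1 h2.
by rewrite addnS -addSn; apply: IH.
Qed.

Lemma runR_size0 (z1 w1 z2 w2 : nat -> C) m :
  (size (runR z1 w1 z2 w2 m (1%R, 0%R)).1 <= m.+1)%N.
Proof. by rewrite -[m.+1]/((0 + m).+1); apply: runR_size; rewrite ?size_poly1 ?size_poly0. Qed.

Lemma mxpowE n (M : 'M[C]_n.+1) k : mxpow M k = M ^+ k.
Proof. by elim: k => [|k IH] //=; rewrite /mxpow /= -/(mxpow M k) IH exprS mulmxE. Qed.

Lemma poly_mxE n (M : 'M[C]_n.+1) p : poly_mx p M = horner_mx M p.
Proof.
rewrite /poly_mx -[in RHS](coefK p) poly_def linear_sum /=; apply: eq_bigr => i _.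
by rewrite linearZ /= rmorphXn /= horner_mx_X mxpowE.
Qed.

Lemma horner_conj n (V D : 'M[C]_n.+1) p : V *m adj V = 1%:M -> adj V *m V = 1%:M ->
  horner_mx (V *m D *m adj V) p = V *m horner_mx D p *m adj V.
Proof.
move=> h1 h2; elim/poly_ind: p => [|p c IH].
  by rewrite !rmorph0 mulmx0 mul0mx.
rewrite !hMD !rmorphM /= !horner_mx_X !horner_mx_C IH -!mulmxE.
rewrite mulmxDr mulmxDl mul_mx_scalar -scalemxAl h1 scalemx1.
by rewrite !mulmxA -[V *m horner_mx D p *m adj V *m V]mulmxA h2 mulmx1.
Qed.

End S4.
Unset Implicit Arguments. Set Strict Implicit.

Lemma AdA (R : realType) n (A W1 V1 : 'M[R[i]]_n.+1) (sigma : 'I_n.+1 -> R) :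
  unitary W1 -> A = W1 *m diag_mx (\row_k (sigma k)%:C) *m adj V1 ->
  adj A *m A = V1 *m diag_mx (\row_k ((sigma k)%:C * (sigma k)%:C)) *m adj V1.
Proof.
move=> [_ hW] ->; rewrite !adj_mul adjK adj_diag_real !mulmxA.
rewrite -[V1 *m _ *m adj W1 *m W1]mulmxA hW mulmx1 -[V1 *m _ *m _]mulmxA mulmx_diag.
by congr (_ *m diag_mx _ *m _); apply/rowP => j; rewrite !mxE.
Qed.

Lemma sigma_le1 (R : realType) n (A Cm W1 V1 : 'M[R[i]]_n.+1) (sigma : 'I_n.+1 -> R) :
  adj A *m A + adj Cm *m Cm = 1%:M -> unitary W1 -> unitary V1 -> (forall k, 0 <= sigma k) ->
  A = W1 *m diag_mx (\row_k (sigma k)%:C) *m adj V1 -> forall k, sigma k <= 1.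
Proof.
move=> e hW [hV1 hV2] hs hA k.
have e2 : diag_mx (\row_k ((sigma k)%:C * (sigma k)%:C)) = 1%:M - adj (Cm *m V1) *m (Cm *m V1).
  have : adj V1 *m (adj A *m A) *m V1 = diag_mx (\row_k ((sigma k)%:C * (sigma k)%:C)).
    by rewrite (AdA _ _ _ _ _ _ hW hA) !mulmxA hV2 mul1mx -mulmxA hV2 mulmx1.
  move <-; have -> : adj A *m A = 1%:M - adj Cm *m Cm by rewrite -e addrK.
  by rewrite mulmxBr mulmxBl mulmx1 hV2 adj_mul !mulmxA.
have := congr1 (fun M : 'M[R[i]]_n.+1 => M k k) e2; rewrite /= !mxE eqxx mulr1n.
set S := \sum_(j < n.+1) _ => hk.
have S0 : 0 <= S.
  by apply: sumr_ge0 => j _; rewrite !mxE mulrC mulcJ_ge0.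
have : ((sigma k * sigma k)%:C <= (1 : R)%:C).
  by rewrite rmorphM /= hk rmorph1 gerBl.
rewrite lecR => h; have := hs k; nra.
Qed.

Theorem mainTheorem8 (R : realType) (n : nat)
  (U : 'M[R[i]]_(n.+1 + n.+1))
  (W1 V1 : 'M[R[i]]_n.+1) (sigma : 'I_n.+1 -> R)
  (d : nat) (phi : nat -> R) :
  unitary U ->
  unitary W1 -> unitary V1 ->
  (forall k, 0 <= sigma k) ->
  ulsubmx U = W1 *m diag_mx (\row_k (sigma k)%:C) *m adj V1 ->
  (0 < d)%N ->
  exists p : {poly R[i]},
    [/\ (size p <= (2 * d).+1)%N,
        even_poly_p p,
        (forall x : R, -1 <= x <= 1 -> Pqsp d phi x = p.[x%:C]),
        ulsubmx (Oseq U d phi)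
          = V1 *m diag_mx (\row_k Pqsp d phi (sigma k)) *m adj V1
      & exists pt : {poly R[i]},
          p = pt \Po 'X^2 /\
          ulsubmx (Oseq U d phi)
            = poly_mx pt (adj (ulsubmx U) *m ulsubmx U)].
Proof.
move=> hU hW hV hsig hA hd.
set A := ulsubmx U in hA *; set B := ursubmx U; set Cm := dlsubmx U; set D := drsubmx U.
have eU : U = block_mx A B Cm D by rewrite /A /B /Cm /D submxK.
have [u1 u2] := hU.
rewrite eU adj_block mulmx_block scalar_mx_block in u1 u2.
rewrite mulmx_block in u2.
have [a1 _ a3 _] := eq_block_mx u1.
have [b1 _ b3 _] := eq_block_mx u2.
have hBB : B *m adj B = 1%:M - A *m adj A by rewrite -a1 addrAC subrr add0r.
have hDB : D *m adj B = - (Cm *m adj A) by apply/eqP; rewrite -addr_eq0 addrC a3.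
have hCC : adj Cm *m Cm = 1%:M - adj A *m A by rewrite -b1 addrAC subrr add0r.
have hDC : adj D *m Cm = - (adj B *m A) by apply/eqP; rewrite -addr_eq0 addrC b3.
set pt := expi (phi 0) *: (runR (zM1 phi) (wM1 phi) (zM2 phi) (wM2 phi) d (1, 0)).1.
have hO : ulsubmx (Oseq U d phi) = horner_mx (adj A *m A) pt.
  by rewrite {1}eU (ulO _ _ _ _ _ _ hBB hDB hCC hDC phi d).
have hpt : (size pt <= d.+1)%N.
  exact: leq_trans (size_scale_leq _ _) (runR_size0 _ _ _ _ d).
have hsig1 := sigma_le1 _ _ _ _ _ _ _ b1 hW hV hsig hA.
exists (pt \Po 'X^2); split.
- apply: leq_trans (size_comp_poly_leq _ _) _; rewrite size_polyXn /=; move: hpt; move: (size pt) => s hs; lia.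
- by move=> k hk; rewrite coef_comp_poly_Xn // dvdn2 hk.
- move=> x hx; rewrite (PqspM _ _ _ _ hx hd) horner_comp hornerXn expr2 //.
- rewrite hO (AdA _ _ _ _ _ _ hW hA) horner_conj; [|by case: hV|by case: hV].
  rewrite horner_mx_diag; congr (_ *m diag_mx _ *m _); apply/rowP => k; rewrite !mxE.
  have hk : -1 <= sigma k <= 1 by rewrite hsig1 andbT (le_trans _ (hsig k)) // lerN10.
  by rewrite (PqspM _ _ _ _ hk hd).
by exists pt; split => //; rewrite hO poly_mxE.
Qed.
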